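(* Let $1\le k\le n-2$ and let $\Sigma=\mathbb{S}^k\times\mathbb{R}^{n-k}\subset\mathbb{R}^{n+1}$ be a self-shrinker, with $r=|\vec x|$ where $\vec x$ are Euclidean coordinates on the $\mathbb{R}^{n-k}$ factor. Then both regions $\{r<\sqrt{2(n-k)}\}$ and $\{r>\sqrt{2(n-k)}\}$ are stable, and $\{r=\sqrt{2(n-k)}\}$ is the unique rotationally symmetric hypersurface of the form $\{r=C\}$, $C>0$, that splits $\Sigma$ into two stable regions $\{r<C\}$ and $\{r>C\}$.
   Context: $\mathbb{S}^k$ is the round sphere of radius $\sqrt{2k}$ centered at the origin of $\mathbb{R}^{k+1}$. Stability operator: $Lf=\Delta f-\tfrac12\langle\vec x,\nabla f\rangle+(|A|^2+\tfrac12)f$. A region $\Omega$ is stable if there exists a function $u$ with $Lu=0$ and $u>0$ on $\Omega$. *)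

(* Defs.v *)
From Stdlib Require Import Reals Lra Lia.
Open Scope R_scope.

(* Points of R^{n+1} are represented as functions nat -> R; only the
   coordinates 0..n are meaningful.  For the cylinder
   Sigma = S^k x R^{n-k}, coordinates 0..k are the sphere factor
   (y in R^{k+1}, |y| = sqrt(2k)) and coordinates k+1..n are the
   R^{n-k} factor (x). *)

Fixpoint rsum (N : nat) (f : nat -> R) : R :=
  match N with
  | O => 0
  | S N' => rsum N' f + f N'
  end.

Definition upd (p : nat -> R) (i : nat) (t : R) : nat -> R :=
  fun j => if Nat.eqb j i then t else p j.

Definition rho (k : nat) : R := sqrt (2 * INR k).

Definition ysq (k : nat) (p : nat -> R) : R := rsum (S k) (fun i => p i ^ 2).

Definition rflat (k n : nat) (p : nat -> R) : R :=
  sqrt (rsum (n - k) (fun j => p (S k + j)%nat ^ 2)).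

Definition on_cyl (k : nat) (p : nat -> R) : Prop := ysq k p = 2 * INR k.

(* Extension of a function u on Sigma to the open set {y <> 0} of R^{n+1},
   homogeneous of degree 0 in y: ext u (y,x) = u (rho k * y/|y|, x).
   It only uses the values of u at (canonical) points of Sigma
   (coordinates beyond n are set to 0).  Its Euclidean Laplacian at a
   point of Sigma is the Laplacian of Sigma applied to u. *)
Definition ext (k n : nat) (u : (nat -> R) -> R) (p : nat -> R) : R :=
  u (fun i => if Nat.leb i k then rho k / sqrt (ysq k p) * p i
              else if Nat.leb i n then p i else 0).

Definition is_C2_on (N : nat) (U : (nat -> R) -> Prop) (F : (nat -> R) -> R)
  (D1 : nat -> (nat -> R) -> R) (D2 : nat -> nat -> (nat -> R) -> R) : Prop :=
  (forall p, U p -> forall i, (i < N)%nat ->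
     derivable_pt_lim (fun t => F (upd p i t)) (p i) (D1 i p)) /\
  (forall p, U p -> forall i j, (i < N)%nat -> (j < N)%nat ->
     derivable_pt_lim (fun t => D1 i (upd p j t)) (p j) (D2 i j p)) /\
  (forall p, U p -> forall i j, (i < N)%nat -> (j < N)%nat ->
     forall eps, 0 < eps -> exists delta, 0 < delta /\
       forall q, U q -> (forall l, (l < N)%nat -> Rabs (q l - p l) < delta) ->
         Rabs (D2 i j q - D2 i j p) < eps).

(* |A|^2 on Sigma: k principal curvatures equal to 1/rho k, the others 0 *)
Definition A2 (k : nat) : R := INR k / (rho k) ^ 2.

(* The stability operator L u = Delta u - 1/2 <X, grad u> + (|A|^2 + 1/2) u
   at a point p of Sigma, computed from the degree-0 extension F = ext u
   with partials D1, D2 (X = position vector in R^{n+1}; the sphere part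
   of <X, grad F> vanishes by homogeneity). *)
Definition stab_op (k n : nat) (F : (nat -> R) -> R)
  (D1 : nat -> (nat -> R) -> R) (D2 : nat -> nat -> (nat -> R) -> R)
  (p : nat -> R) : R :=
  rsum (S n) (fun i => D2 i i p)
  - / 2 * rsum (S n) (fun i => p i * D1 i p)
  + (A2 k + / 2) * F p.

Definition stable_region (k n : nat) (Pr : R -> Prop) : Prop :=
  exists (u : (nat -> R) -> R) D1 D2,
    is_C2_on (S n) (fun p => 0 < ysq k p /\ Pr (rflat k n p)) (ext k n u) D1 D2 /\
    (forall p, on_cyl k p -> Pr (rflat k n p) ->
       0 < ext k n u p /\ stab_op k n (ext k n u) D1 D2 p = 0).

(* Main.v *)
Require Import Defs.
From Stdlib Require Import Reals Lra Lia FunctionalExtensionality Bool.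

Module EVTmod.
From HB Require Import structures.
From mathcomp Require Import all_boot all_order all_algebra.
From mathcomp Require Import all_classical all_reals all_analysis.
From mathcomp Require Import Rstruct Rstruct_topology.
Import Order.TTheory GRing.Theory Num.Theory.
Import numFieldNormedType.Exports.
Local Open Scope classical_set_scope.
Local Open Scope ring_scope.

Lemma ballRE (x y : R) e : ball x e y <-> Rabs (x - y)%R < e.
Proof. by rewrite /ball /=. Qed.

Lemma Rabs_le_iff (x B : R) : Rle (Rabs x) B -> Rle (Ropp B) x /\ Rle x B.
Proof. unfold Rabs; destruct (Rcase_abs x); intros; split; lra. Qed.

Section EVT.
Variable N' : nat.
Definition emb (v : 'rV[R]_N'.+1) : nat -> R :=
  fun i => if (i <= N')%N then v ord0 (inord i) else 0.

Lemma EVT_nat (K : (nat->R)->Prop) (f : (nat->R)->R) (B : R) :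
  (exists p0, K p0) ->
  (forall p, K p -> forall i, (i <= N')%nat -> Rle (Rabs (p i)) B) ->
  (forall p, K p -> forall i, (N' < i)%nat -> p i = R0) ->
  (forall p, (forall i, (N' < i)%nat -> p i = R0) ->
     (forall eps, Rlt R0 eps -> exists q, K q /\ forall i, (i <= N')%nat -> Rlt (Rabs (Rminus (q i) (p i))) eps) -> K p) ->
  (forall p, K p -> forall eps, Rlt R0 eps -> exists delta, Rlt R0 delta /\
     forall q, K q -> (forall i, (i <= N')%nat -> Rlt (Rabs (Rminus (q i) (p i))) delta) -> Rlt (Rabs (Rminus (f q) (f p))) eps) ->
  exists c, K c /\ forall p, K p -> Rle (f p) (f c).
Proof.
move=> [p0 Kp0] Kb Kz Kcl fc.
pose row_of (p : nat -> R) : 'rV[R]_N'.+1 := \row_(i < N'.+1) p i.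
have embK p : (forall i, (N' < i)%nat -> p i = 0%R) -> emb (row_of p) = p.
  move=> Hp; apply: funext => i; rewrite /emb.
  case: ifP => Hi; first by rewrite mxE inordK.
  by rewrite Hp // ltnNge Hi.
have embz v i : (N' < i)%nat -> emb v i = 0%R by rewrite /emb ltnNge => /negbTE ->.
have embv v (i : 'I_N'.+1) : emb v i = v ord0 i.
  by rewrite /emb -ltnS ltn_ord inord_val.
pose A := [set v : 'rV[R]_N'.+1 | K (emb v)].
have A0 : A !=set0 by exists (row_of p0); rewrite /A /= embK //; apply: Kz.
have clA : closed A.
  move=> v clv; rewrite /A /=; apply: Kcl; first by move=> i; exact: embz.
  move=> eps eps0.
  have Hn : nbhs v (ball v eps) by apply: nbhsx_ballx; exact/RltP.
  have [q [Aq bq]] := clv _ Hn.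
  exists (emb q); split => // i Hi.
  have := bq.2 ord0 (inord i); rewrite ballRE /emb Hi.
  move/RltP; rewrite -Rabs_Ropp; congr (Rlt _ _); congr Rabs.
  rewrite /GRing.add /GRing.opp /=. lra.
have cA : compact A.
  apply: (subclosed_compact clA); first (apply: (@rV_compact _ _ (fun=> `[(- B)%R, B]%classic)) => i; exact: segment_compact).
  move=> v Av i /=; rewrite in_itv /=.
  have := Kb _ Av i (ltn_ord i); rewrite embv => H.
  have [H1 H2] : Rle (Ropp B) (v ord0 i) /\ Rle (v ord0 i) B.
    exact: Rabs_le_iff H.
  by apply/andP; split; apply/RleP.
have cf : {within A, continuous (fun v => f (emb v))}.
  apply/subspace_continuousP => v Av.
  rewrite /from_subspace; apply/(@cvgrPdist_lt _ R^o) => e e0.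
  have e0' : Rlt R0 e by apply/RltP.
  have [d [d0 Hd]] := fc _ Av e e0'.
  have d0' : 0 < d by apply/RltP.
  have Hb := nbhsx_ballx v d d0'.
  rewrite /within /=. apply: (filterS _ Hb) => w bw Aw.
  have : (Rabs (f (emb w) - f (emb v)) < e)%coqR.
    apply: Hd => // i Hi.
    move: bw => [_ /(_ ord0 (inord i))]; rewrite ballRE /emb Hi.
    move/RltP; rewrite -Rabs_Ropp; congr (Rlt _ _); congr Rabs.
    rewrite /GRing.add /GRing.opp /=. lra.
  move/RltP; rewrite -Rabs_Ropp; congr (_ < _).
  rewrite /GRing.add /GRing.opp /= /Num.norm /=; congr Rabs; lra.
have [c Ac Hc] := compact_EVT_max A0 cA cf.
exists (emb c); split; first by move: Ac; rewrite inE.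
move=> p Kp; rewrite -(embK p (Kz _ Kp)); apply/RleP; apply: Hc.
by rewrite inE /A /= embK //; apply: Kz.
Qed.
Lemma EVT_nat' (K : (nat->R)->Prop) (f : (nat->R)->R) (B : R) :
  (exists p0, K p0) ->
  (forall p, K p -> forall i, Peano.le i N' -> Rle (Rabs (p i)) B) ->
  (forall p, K p -> forall i, Peano.lt N' i -> p i = R0) ->
  (forall p, (forall i, Peano.lt N' i -> p i = R0) ->
     (forall eps, Rlt R0 eps -> exists q, K q /\ forall i, Peano.le i N' -> Rlt (Rabs (Rminus (q i) (p i))) eps) -> K p) ->
  (forall p, K p -> forall eps, Rlt R0 eps -> exists delta, Rlt R0 delta /\
     forall q, K q -> (forall i, Peano.le i N' -> Rlt (Rabs (Rminus (q i) (p i))) delta) -> Rlt (Rabs (Rminus (f q) (f p))) eps) ->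
  exists c, K c /\ forall p, K p -> Rle (f p) (f c).
Proof.
move=> H1 H2 H3 H4 H5; apply: EVT_nat => //.
- by move=> p Kp i /ssrnat.leP; exact: H2.
- by move=> p Kp i /ssrnat.ltP; exact: H3.
- move=> p Hp Happ; apply: H4 => [i /ssrnat.ltP|eps e0]; first exact: Hp.
  have [q [Kq Hq]] := Happ eps e0; exists q; split => // i /ssrnat.leP; exact: Hq.
- move=> p Kp eps e0; have [d [d0 Hd]] := H5 p Kp eps e0; exists d; split => // q Kq Hq.
  by apply: Hd => // i Hi; apply: Hq; exact/ssrnat.leP.
Qed.
End EVT.

End EVTmod.

Open Scope R_scope.


Lemma rsum_ext N f g : (forall j, (j < N)%nat -> f j = g j) -> rsum N f = rsum N g.
Proof.
  induction N; simpl; intros H; auto.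
  rewrite IHN by (intros; apply H; lia). rewrite H by lia. reflexivity.
Qed.

Lemma rsum_add a b f : rsum (a + b) f = rsum a f + rsum b (fun j => f (a + j)%nat).
Proof.
  induction b; simpl.
  - rewrite Nat.add_0_r; ring.
  - rewrite Nat.add_succ_r; simpl; rewrite IHb; ring.
Qed.

Lemma rsum_plus N f g : rsum N (fun j => f j + g j) = rsum N f + rsum N g.
Proof. induction N; simpl; [ring| rewrite IHN; ring]. Qed.

Lemma rsum_scal N c f : rsum N (fun j => c * f j) = c * rsum N f.
Proof. induction N; simpl; [ring| rewrite IHN; ring]. Qed.

Lemma rsum_zero N f : (forall j, (j < N)%nat -> f j = 0) -> rsum N f = 0.
Proof. intros H; rewrite (rsum_ext N f (fun _ => 0)) by auto. induction N; simpl; [ring|rewrite IHN by (intros; apply H; lia); ring]. Qed.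

Lemma rsum_le N f g : (forall j, (j < N)%nat -> f j <= g j) -> rsum N f <= rsum N g.
Proof.
  induction N; simpl; intros H; [lra|].
  assert (H1 := IHN (fun j Hj => H j ltac:(lia))). assert (H2 := H N ltac:(lia)). lra.
Qed.

Lemma rsum_nonneg N f : (forall j, (j < N)%nat -> 0 <= f j) -> 0 <= rsum N f.
Proof. intros H; rewrite <- (rsum_zero N (fun _ => 0)) by auto. apply rsum_le; auto. Qed.

Lemma rsum_term N f j0 : (forall j, (j < N)%nat -> 0 <= f j) -> (j0 < N)%nat -> f j0 <= rsum N f.
Proof.
  induction N; simpl; intros H Hj; [lia|].
  assert (0 <= rsum N f) by (apply rsum_nonneg; intros; apply H; lia).
  destruct (Nat.eq_dec j0 N) as [->|Hne]; [lra|].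
  assert (f j0 <= rsum N f) by (apply IHN; [intros; apply H; lia| lia]).
  assert (0 <= f N) by (apply H; lia). lra.
Qed.

Lemma rsum_const_le N f c : (forall j, (j < N)%nat -> f j <= c) -> rsum N f <= INR N * c.
Proof.
  induction N; cbn [rsum]; intros H; [simpl; lra|].
  assert (rsum N f <= INR N * c) by (apply IHN; intros; apply H; lia).
  assert (f N <= c) by (apply H; lia). rewrite S_INR. lra.
Qed.

Lemma rsum_const N c : rsum N (fun _ => c) = INR N * c.
Proof. induction N; cbn [rsum]; [simpl; ring|rewrite IHN, S_INR; ring]. Qed.

Lemma rsum_upd M o p i t :
  rsum M (fun j => upd p i t (o + j)%nat ^ 2) =
  rsum M (fun j => p (o + j)%nat ^ 2) +
  (if andb (o <=? i)%nat (i <? o + M)%nat then t ^ 2 - p i ^ 2 else 0).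
Proof.
  induction M; cbn [rsum].
  - destruct (andb (o <=? i)%nat (i <? o + 0)%nat) eqn:E; [|ring].
    apply andb_true_iff in E; destruct E as [E1 E2].
    apply Nat.leb_le in E1; apply Nat.ltb_lt in E2; lia.
  - rewrite IHM. unfold upd at 1.
    destruct (Nat.eqb_spec (o + M) i) as [Hi|Hi].
    + subst i. replace (andb (o <=? o + M)%nat (o + M <? o + M)%nat) with false.
      2:{ symmetry; apply andb_false_iff; right; apply Nat.ltb_ge; lia. }
      replace (andb (o <=? o + M)%nat (o + M <? o + S M)%nat) with true.
      2:{ symmetry; apply andb_true_iff; split; [apply Nat.leb_le|apply Nat.ltb_lt]; lia. }
      ring.
    + replace (andb (o <=? i)%nat (i <? o + S M)%nat) with (andb (o <=? i)%nat (i <? o + M)%nat).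
      * ring.
      * destruct (Nat.leb_spec o i); simpl; auto.
        destruct (Nat.ltb_spec i (o+M)); destruct (Nat.ltb_spec i (o + S M)); auto; lia.
Qed.

Lemma upd_same p i : upd p i (p i) = p.
Proof. apply functional_extensionality; intros j; unfold upd; destruct (Nat.eqb_spec j i); subst; auto. Qed.

Lemma upd_upd p i s t : upd (upd p i s) i t = upd p i t.
Proof. apply functional_extensionality; intros j; unfold upd; destruct (Nat.eqb_spec j i); auto. Qed.

Lemma upd_eq p i t : upd p i t i = t.
Proof. unfold upd; rewrite Nat.eqb_refl; auto. Qed.

Lemma dlim_poly4 (A B Cc x : R) :
  derivable_pt_lim (fun t => A * t ^ 4 + B * t ^ 2 + Cc) x (4 * A * x ^ 3 + 2 * B * x).
Proof.
  assert (H1 := derivable_pt_lim_pow x 4). assert (H2 := derivable_pt_lim_pow x 2).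
  assert (H3 := derivable_pt_lim_scal _ A _ _ H1). assert (H4 := derivable_pt_lim_scal _ B _ _ H2).
  assert (H5 := derivable_pt_lim_plus _ _ _ _ _ H3 H4).
  assert (H6 := derivable_pt_lim_plus _ _ _ _ _ H5 (derivable_pt_lim_const Cc x)).
  replace (4 * A * x ^ 3 + 2 * B * x) with (A * (INR 4 * x ^ Init.Nat.pred 4) + B * (INR 2 * x ^ Init.Nat.pred 2) + 0)
    by (simpl; ring).
  eapply derivable_pt_lim_ext; [|exact H6]. intros z; unfold plus_fct, mult_real_fct; reflexivity.
Qed.

Lemma dlim_poly3 (A B x : R) :
  derivable_pt_lim (fun t => A * t ^ 3 + B * t) x (3 * A * x ^ 2 + B).
Proof.
  assert (H1 := derivable_pt_lim_pow x 3). assert (H2 := derivable_pt_lim_id x).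
  assert (H3 := derivable_pt_lim_scal _ A _ _ H1). assert (H4 := derivable_pt_lim_scal _ B _ _ H2).
  assert (H5 := derivable_pt_lim_plus _ _ _ _ _ H3 H4).
  replace (3 * A * x ^ 2 + B) with (A * (INR 3 * x ^ Init.Nat.pred 3) + B * 1) by (simpl; ring).
  eapply derivable_pt_lim_ext; [|exact H5]. intros z; unfold plus_fct, mult_real_fct, id; reflexivity.
Qed.


Definition xs (k n : nat) (p : nat -> R) : R := rsum (n - k) (fun j => p (S k + j)%nat ^ 2).
Definition xind (k n i : nat) : bool := andb (k <? i)%nat (i <=? n)%nat.
Definition canon (k n : nat) (q : nat -> R) : nat -> R :=
  fun i => if Nat.leb i k then rho k / sqrt (ysq k q) * q i
           else if Nat.leb i n then q i else 0.

Lemma ext_canon k n u p : ext k n u p = u (canon k n p).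
Proof. reflexivity. Qed.

Lemma rflat_xs k n p : rflat k n p = sqrt (xs k n p).
Proof. reflexivity. Qed.

Lemma rsum_ind k n g : (k <= n)%nat ->
  rsum (S n) (fun i => if xind k n i then g i else 0) = rsum (n - k) (fun j => g (S k + j)%nat).
Proof.
  intros Hkn. replace (S n) with (S k + (n - k))%nat by lia. rewrite rsum_add.
  rewrite rsum_zero.
  - rewrite Rplus_0_l. apply rsum_ext; intros j Hj. unfold xind.
    replace (andb (k <? S k + j)%nat (S k + j <=? n)%nat) with true; auto.
    symmetry; apply andb_true_iff; split; [apply Nat.ltb_lt|apply Nat.leb_le]; lia.
  - intros j Hj; unfold xind. replace (k <? j)%nat with false; auto.
    symmetry; apply Nat.ltb_ge; lia.
Qed.

Lemma xs_upd k n p i t : (k <= n)%nat ->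
  xs k n (upd p i t) = xs k n p + (if xind k n i then t ^ 2 - p i ^ 2 else 0).
Proof.
  intros Hkn. unfold xs. rewrite rsum_upd. f_equal.
  unfold xind. destruct (Nat.leb_spec (S k) i), (Nat.ltb_spec k i), (Nat.ltb_spec i (S k + (n-k))), (Nat.leb_spec i n); simpl; auto; lia.
Qed.

Lemma ysq_upd k p i t :
  ysq k (upd p i t) = ysq k p + (if (i <=? k)%nat then t ^ 2 - p i ^ 2 else 0).
Proof.
  unfold ysq. change (rsum (S k) (fun j => upd p i t (0 + j)%nat ^ 2) =
   rsum (S k) (fun j => p (0 + j)%nat ^ 2) + (if (i <=? k)%nat then t ^ 2 - p i ^ 2 else 0)).
  rewrite rsum_upd. f_equal.
Qed.

Lemma xs_nonneg k n p : 0 <= xs k n p.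
Proof. apply rsum_nonneg; intros; apply pow2_ge_0. Qed.

Lemma ysq_nonneg k p : 0 <= ysq k p.
Proof. apply rsum_nonneg; intros; apply pow2_ge_0. Qed.

Lemma xs_canon k n q : xs k n (canon k n q) = xs k n q.
Proof.
  unfold xs; apply rsum_ext; intros j Hj. unfold canon.
  replace (S k + j <=? k)%nat with false by (symmetry; apply Nat.leb_gt; lia).
  replace (S k + j <=? n)%nat with true by (symmetry; apply Nat.leb_le; lia). reflexivity.
Qed.

Lemma rho_sq k : rho k ^ 2 = 2 * INR k.
Proof. unfold rho. rewrite pow2_sqrt; auto. apply Rmult_le_pos; [lra|apply pos_INR]. Qed.

Lemma rho_pos k : (1 <= k)%nat -> 0 < rho k.
Proof. intros H; unfold rho; apply sqrt_lt_R0. assert (1 <= INR k) by (apply (le_INR 1); auto). lra. Qed.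

Lemma ysq_canon k n q : (1 <= k)%nat -> 0 < ysq k q -> ysq k (canon k n q) = 2 * INR k.
Proof.
  intros Hk Hy. unfold ysq at 1.
  rewrite (rsum_ext _ _ (fun i => (rho k / sqrt (ysq k q)) ^ 2 * (q i ^ 2))).
  - rewrite rsum_scal. fold (ysq k q). unfold Rdiv. rewrite Rpow_mult_distr, pow_inv, pow2_sqrt by lra.
    rewrite rho_sq. field. lra.
  - intros i Hi. unfold canon. replace (i <=? k)%nat with true by (symmetry; apply Nat.leb_le; lia). ring.
Qed.

Lemma canon_idem k n q : (1 <= k)%nat -> 0 < ysq k q -> canon k n (canon k n q) = canon k n q.
Proof.
  intros Hk Hy. apply functional_extensionality; intros i.
  unfold canon at 1. rewrite (ysq_canon k n q Hk Hy).
  destruct (Nat.leb_spec i k).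
  - unfold canon. replace (i <=? k)%nat with true by (symmetry; apply Nat.leb_le; lia).
    fold (rho k). assert (0 < rho k) by (apply rho_pos; auto).
    assert (0 < sqrt (ysq k q)) by (apply sqrt_lt_R0; auto). field. lra.
  - destruct (Nat.leb_spec i n); auto. unfold canon.
    replace (i <=? k)%nat with false by (symmetry; apply Nat.leb_gt; lia).
    replace (i <=? n)%nat with false by (symmetry; apply Nat.leb_gt; lia). auto.
Qed.

Lemma ext_canon2 k n u q : (1 <= k)%nat -> 0 < ysq k q -> ext k n u (canon k n q) = ext k n u q.
Proof. intros Hk Hy. rewrite !ext_canon, canon_idem; auto. Qed.

Lemma canon_cyl k n q : (1 <= k)%nat -> 0 < ysq k q -> on_cyl k (canon k n q).
Proof. intros; unfold on_cyl; apply ysq_canon; auto. Qed.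

Lemma A2_half k : (1 <= k)%nat -> A2 k = / 2.
Proof.
  intros Hk. unfold A2. rewrite rho_sq. assert (1 <= INR k) by (apply (le_INR 1); auto). field. lra.
Qed.


Lemma dlim_const_ext (f : R -> R) c x : (forall t, f t = c) -> derivable_pt_lim f x 0.
Proof. intros H. eapply derivable_pt_lim_ext; [|apply (derivable_pt_lim_const c)]. intros; rewrite H; auto. Qed.

Lemma sum_ind_pair k n (f : nat -> R) (g : nat -> R) : (k <= n)%nat ->
  rsum (S n) (fun i => f i * (if xind k n i then g i else 0)) = rsum (n - k) (fun j => f (S k + j)%nat * g (S k + j)%nat).
Proof.
  intros Hkn. rewrite <- (rsum_ind k n (fun i => f i * g i)) by auto. apply rsum_ext; intros i _.
  destruct (xind k n i); ring.
Qed.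

Lemma exist_stable k n (hk : (1 <= k)%nat) (hkn : (k <= n)%nat) (beta : R) (Pr : R -> Prop) :
  (forall s, 0 <= s -> Pr (sqrt s) -> 0 < beta * (s - 2 * INR (n - k))) ->
  stable_region k n Pr.
Proof.
  intros Hpos.
  set (gam := - (2 * beta * INR (n - k))).
  set (u := fun p => beta * xs k n p + gam).
  assert (Hu : forall p, ext k n u p = beta * xs k n p + gam).
  { intros p. rewrite ext_canon. unfold u. rewrite xs_canon. auto. }
  exists u, (fun i p => if xind k n i then 2 * beta * p i else 0),
    (fun i j p => if andb (xind k n i) (i =? j)%nat then 2 * beta else 0).
  split; [split; [|split]|].
  - intros p _ i _.
    apply (derivable_pt_lim_ext (fun t => beta * (xs k n p + (if xind k n i then t^2 - p i^2 else 0)) + gam)).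
    { intros t. rewrite Hu, xs_upd by auto. reflexivity. }
    destruct (xind k n i).
    + replace (2 * beta * p i) with (4 * 0 * p i ^ 3 + 2 * beta * p i) by ring.
      eapply derivable_pt_lim_ext; [|apply (dlim_poly4 0 beta (beta * (xs k n p - p i ^ 2) + gam))].
      intros t; simpl; ring.
    + apply (dlim_const_ext _ (beta * (xs k n p + 0) + gam)). auto.
  - intros p _ i j _ _. unfold upd.
    destruct (xind k n i); simpl.
    + destruct (Nat.eqb_spec i j).
      * subst j.
        replace (2 * beta) with (3 * 0 * p i ^ 2 + 2 * beta) by ring.
        eapply derivable_pt_lim_ext; [|apply (dlim_poly3 0 (2 * beta))]. intros t; simpl; ring.
      * apply (dlim_const_ext _ (2 * beta * p i)). intros t.
        destruct (Nat.eqb_spec i j); [contradiction|auto].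
    + apply (dlim_const_ext _ 0). auto.
  - intros p _ i j _ _ eps Heps. exists 1. split; [lra|]. intros q _ _.
    rewrite Rminus_diag, Rabs_R0. auto.
  - intros p Hcyl HP. rewrite Hu. split.
    + unfold gam. assert (H := Hpos (xs k n p) (xs_nonneg k n p) HP). nra.
    + unfold stab_op. rewrite Hu, A2_half by auto.
      rewrite (rsum_ext _ _ (fun i => if xind k n i then 2 * beta else 0)).
      2:{ intros i _. rewrite Nat.eqb_refl, andb_true_r. auto. }
      rewrite rsum_ind, rsum_const by auto.
      rewrite sum_ind_pair by auto.
      rewrite (rsum_ext _ _ (fun j => 2 * beta * (p (S k + j)%nat ^ 2))) by (intros; ring).
      rewrite rsum_scal. fold (xs k n p). unfold gam. field.
Qed.


Lemma second_deriv_test (g g' : R -> R) x0 d a :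
  0 < d -> (forall t, Rabs (t - x0) < d -> 0 <= g t) -> g x0 = 0 ->
  (forall t, Rabs (t - x0) < d -> derivable_pt_lim g t (g' t)) ->
  derivable_pt_lim g' x0 a -> g' x0 = 0 /\ 0 <= a.
Proof.
  intros Hd Hg Hg0 Hder Ha.
  assert (H1 : g' x0 = 0).
  { assert (pr : derivable_pt g x0).
    { exists (g' x0). apply Hder. rewrite Rminus_diag, Rabs_R0; auto. }
    rewrite <- (derive_pt_eq_0 g x0 (g' x0) pr).
    - apply (deriv_minimum g (x0 - d) (x0 + d)); try lra.
      intros x H2 H3. rewrite Hg0. apply Hg. apply Rabs_def1; lra.
    - apply Hder. rewrite Rminus_diag, Rabs_R0; auto. }
  split; auto.
  destruct (Rle_or_lt 0 a) as [|Hneg]; auto. exfalso.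
  destruct (Ha (- a / 2) ltac:(lra)) as [del Hdel].
  set (h := Rmin del d / 2).
  assert (Hdpos := cond_pos del).
  assert (Hh : 0 < h) by (unfold h; apply Rmin_case; lra).
  assert (Hhd : h < d) by (unfold h; assert (Rmin del d <= d) by apply Rmin_r; lra).
  assert (Hhdel : h < del) by (unfold h; assert (Rmin del d <= del) by apply Rmin_l; lra).
  destruct (MVT_cor2 g g' x0 (x0 + h)) as [c [Hc1 Hc2]]; [lra| |].
  { intros c Hc. apply Hder. apply Rabs_def1; lra. }
  assert (Hgc : g' c < 0).
  { assert (Hs := Hdel (c - x0) ltac:(lra) ltac:(apply Rabs_def1; lra)).
    replace (x0 + (c - x0)) with c in Hs by ring. rewrite H1 in Hs.
    apply Rabs_def2 in Hs. destruct Hs as [Hs1 Hs2].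
    assert (Hq : g' c / (c - x0) < 0) by (unfold Rminus in *; lra).
    assert (0 < c - x0) by lra.
    replace (g' c) with (g' c / (c - x0) * (c - x0)) by (field; lra).
    nra. }
  assert (0 <= g (x0 + h)) by (apply Hg; apply Rabs_def1; lra).
  nra.
Qed.

Lemma mvt_bound (g g' : R -> R) a b B :
  (forall t, Rmin a b <= t <= Rmax a b -> derivable_pt_lim g t (g' t) /\ Rabs (g' t) <= B) ->
  Rabs (g b - g a) <= B * Rabs (b - a).
Proof.
  intros H. destruct (Rtotal_order a b) as [Hab|[Hab|Hab]].
  - destruct (MVT_cor2 g g' a b Hab) as [c [Hc1 Hc2]].
    { intros c Hc; apply H. rewrite Rmin_left, Rmax_right by lra. lra. }
    rewrite Hc1, Rabs_mult. apply Rmult_le_compat_r; [apply Rabs_pos|].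
    apply H. rewrite Rmin_left, Rmax_right by lra. lra.
  - subst. rewrite !Rminus_diag, Rabs_R0. assert (0 <= Rabs (g' b)) by apply Rabs_pos.
    assert (Rabs (g' b) <= B) by (apply H; rewrite Rmin_left, Rmax_left by lra; lra). lra.
  - destruct (MVT_cor2 g g' b a Hab) as [c [Hc1 Hc2]].
    { intros c Hc; apply H. rewrite Rmin_right, Rmax_left by lra. lra. }
    rewrite <- Rabs_Ropp, <- (Rabs_Ropp (b - a)).
    replace (- (g b - g a)) with (g a - g b) by ring. replace (- (b - a)) with (a - b) by ring.
    rewrite Hc1, Rabs_mult. apply Rmult_le_compat_r; [apply Rabs_pos|].
    apply H. rewrite Rmin_right, Rmax_left by lra. lra.
Qed.

Definition Vbox (N : nat) (p : nat -> R) (r : R) (z : nat -> R) : Prop :=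
  (forall l, (N <= l)%nat -> z l = p l) /\ (forall l, (l < N)%nat -> Rabs (z l - p l) <= r).

Lemma between_abs a b t : Rmin a b <= t <= Rmax a b -> Rabs (t - a) <= Rabs (b - a).
Proof.
  unfold Rmin, Rmax; destruct (Rle_dec a b); intros H;
  unfold Rabs; destruct (Rcase_abs (t - a)); destruct (Rcase_abs (b - a)); lra.
Qed.

Lemma chain N (G : (nat -> R) -> R) (H : nat -> (nat -> R) -> R) p q r B :
  (forall z, Vbox N p r z -> forall j, (j < N)%nat ->
     derivable_pt_lim (fun t => G (upd z j t)) (z j) (H j z) /\ Rabs (H j z) <= B) ->
  Vbox N p r q ->
  Rabs (G q - G p) <= B * rsum N (fun l => Rabs (q l - p l)).
Proof.
  intros HD [Hq1 Hq2].
  set (mix := fun J l => if (l <? J)%nat then q l else p l).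
  assert (Hmix : forall J, (J <= N)%nat -> Rabs (G (mix J) - G p) <= B * rsum J (fun l => Rabs (q l - p l))).
  { induction J; intros HJ.
    - replace (mix 0%nat) with p.
      + rewrite Rminus_diag, Rabs_R0. simpl. lra.
      + apply functional_extensionality; intros l; unfold mix. destruct l; auto.
    - assert (Hm : mix (S J) = upd (mix J) J (q J)).
      { apply functional_extensionality; intros l; unfold mix, upd.
        destruct (Nat.eqb_spec l J).
        - subst. destruct (Nat.ltb_spec J (S J)); auto; lia.
        - destruct (Nat.ltb_spec l (S J)), (Nat.ltb_spec l J); auto; lia. }
      assert (Hm0 : mix J = upd (mix J) J (p J)).
      { rewrite <- (upd_same (mix J) J) at 1. f_equal. unfold mix. destruct (Nat.ltb_spec J J); auto; lia. }
      assert (IH := IHJ ltac:(lia)).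
      assert (Hstep : Rabs (G (upd (mix J) J (q J)) - G (upd (mix J) J (p J))) <= B * Rabs (q J - p J)).
      { apply (mvt_bound (fun t => G (upd (mix J) J t)) (fun t => H J (upd (mix J) J t))).
        intros t Ht.
        assert (Hz : Vbox N p r (upd (mix J) J t)).
        { split.
          - intros l Hl. unfold upd, mix. destruct (Nat.eqb_spec l J); [lia|].
            destruct (Nat.ltb_spec l J); [lia|auto].
          - intros l Hl. unfold upd, mix. destruct (Nat.eqb_spec l J).
            + subst. assert (Habs := between_abs _ _ _ Ht). assert (Hr := Hq2 J Hl). lra.
            + destruct (Nat.ltb_spec l J); [apply Hq2; auto|]. rewrite Rminus_diag, Rabs_R0.
              assert (Hr := Hq2 l Hl). assert (0 <= Rabs (q l - p l)) by apply Rabs_pos. lra. }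
        destruct (HD _ Hz J ltac:(lia)) as [Hd Hb].
        rewrite upd_eq in Hd. split; auto.
        eapply derivable_pt_lim_ext; [|exact Hd]. intros s. simpl. rewrite upd_upd. auto. }
      rewrite Hm. cbn [rsum].
      replace (G (upd (mix J) J (q J)) - G p) with
        ((G (upd (mix J) J (q J)) - G (upd (mix J) J (p J))) + (G (mix J) - G p)) by (rewrite <- Hm0; ring).
      eapply Rle_trans; [apply Rabs_triang|]. lra. }
  replace (G q) with (G (mix N)).
  - apply Hmix; lia.
  - f_equal. apply functional_extensionality; intros l; unfold mix.
    destruct (Nat.ltb_spec l N); auto. symmetry; apply Hq1; auto.
Qed.

Lemma fin_delta N (P : nat -> R -> Prop) :
  (forall j d d', P j d -> 0 < d' <= d -> P j d') ->
  (forall j, (j < N)%nat -> exists d, 0 < d /\ P j d) ->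
  exists d, 0 < d /\ forall j, (j < N)%nat -> P j d.
Proof.
  intros Hm. induction N; intros H.
  - exists 1; split; [lra|intros; lia].
  - destruct IHN as [d1 [Hd1 P1]]. { intros j Hj; apply H; lia. }
    destruct (H N ltac:(lia)) as [d2 [Hd2 P2]].
    exists (Rmin d1 d2). assert (0 < Rmin d1 d2) by (apply Rmin_case; lra).
    split; auto. intros j Hj.
    destruct (Nat.eq_dec j N) as [->|Hne].
    + apply (Hm _ d2); auto. split; auto; apply Rmin_r.
    + apply (Hm _ d1); [apply P1; lia|]. split; auto; apply Rmin_l.
Qed.

Lemma fin_bound N (P : nat -> R -> Prop) :
  (forall j B B', P j B -> B <= B' -> P j B') ->
  (forall j, (j < N)%nat -> exists B, P j B) ->
  exists B, forall j, (j < N)%nat -> P j B.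
Proof.
  intros Hm. induction N; intros H.
  - exists 0; intros; lia.
  - destruct IHN as [B1 P1]. { intros j Hj; apply H; lia. }
    destruct (H N ltac:(lia)) as [B2 P2].
    exists (Rmax B1 B2). intros j Hj.
    destruct (Nat.eq_dec j N) as [->|Hne].
    + apply (Hm _ B2); auto; apply Rmax_r.
    + apply (Hm _ B1); [apply P1; lia|apply Rmax_l].
Qed.

Lemma Vbox_mono N p d d' z : Vbox N p d' z -> d' <= d -> Vbox N p d z.
Proof. intros [H1 H2] Hd; split; auto. intros l Hl; specialize (H2 l Hl); lra. Qed.

Lemma Vbox_rsum N p d z : Vbox N p d z -> rsum N (fun l => Rabs (z l - p l)) <= INR N * d.
Proof. intros [_ H]; apply rsum_const_le; auto. Qed.

Lemma C2_cont N U F D1 D2 p r :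
  is_C2_on N U F D1 D2 -> 0 < r -> (forall z, Vbox N p r z -> U z) ->
  forall eps, 0 < eps -> exists d, 0 < d /\ forall q, Vbox N p d q -> Rabs (F q - F p) < eps.
Proof.
  intros [HC1 [HC2 HC3]] Hr HU eps Heps.
  assert (Up : U p) by (apply HU; split; auto; intros; rewrite Rminus_diag, Rabs_R0; lra).
  destruct (fin_delta N (fun i d => d <= r /\ forall z, Vbox N p d z -> forall j, (j < N)%nat ->
              Rabs (D2 i j z) <= Rabs (D2 i j p) + 1)) as [r1 [Hr1 P1]].
  { intros j d d' [Hd1 Hd2] Hd'. split; [lra|]. intros z Hz. apply Hd2. eapply Vbox_mono; eauto; lra. }
  { intros i Hi.
    destruct (fin_delta N (fun j d => d <= r /\ forall z, Vbox N p d z ->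
              Rabs (D2 i j z) <= Rabs (D2 i j p) + 1)) as [d [Hd Pd]].
    { intros j d d' [Hd1 Hd2] Hd'. split; [lra|]. intros z Hz. apply Hd2. eapply Vbox_mono; eauto; lra. }
    { intros j Hj. destruct (HC3 p Up i j Hi Hj 1 ltac:(lra)) as [dl [Hdl Pdl]].
      exists (Rmin r (dl / 2)). assert (0 < Rmin r (dl/2)) by (apply Rmin_case; lra).
      split; auto. split; [apply Rmin_l|]. intros z Hz.
      assert (Hlt : Rabs (D2 i j z - D2 i j p) < 1).
      { apply Pdl.
        - apply HU. eapply Vbox_mono; eauto. apply Rmin_l.
        - intros l Hl. destruct Hz as [_ Hz]. specialize (Hz l Hl).
          assert (Rmin r (dl/2) <= dl/2) by apply Rmin_r. lra. }
      assert (Rabs (D2 i j z) <= Rabs (D2 i j z - D2 i j p) + Rabs (D2 i j p)).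
      { replace (D2 i j z) with ((D2 i j z - D2 i j p) + D2 i j p) at 1 by ring. apply Rabs_triang. }
      lra. }
    exists d. split; auto.
    destruct (Nat.eq_dec N 0) as [->|HN0]; [lia|].
    split; [apply (Pd 0%nat); lia|]. intros z Hz j Hj. apply (Pd j Hj); auto. }
  set (r2 := Rmin r1 r).
  assert (Hr2 : 0 < r2) by (unfold r2; apply Rmin_case; lra).
  assert (Hr2r : r2 <= r) by apply Rmin_r.
  assert (HU2 : forall z, Vbox N p r2 z -> U z) by (intros z Hz; apply HU; eapply Vbox_mono; eauto).
  assert (P2 : forall i j z, (i < N)%nat -> (j < N)%nat -> Vbox N p r2 z -> Rabs (D2 i j z) <= Rabs (D2 i j p) + 1).
  { intros i j z Hi Hj Hz. apply (P1 i Hi); auto. eapply Vbox_mono; eauto. apply Rmin_l. }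
  destruct (fin_bound N (fun i B => forall j, (j < N)%nat -> Rabs (D2 i j p) + 1 <= B)) as [B2 HB2].
  { intros j B B' H1 H2 l Hl. specialize (H1 l Hl). lra. }
  { intros i Hi. apply (fin_bound N (fun j B => Rabs (D2 i j p) + 1 <= B)).
    - intros; lra.
    - intros j Hj; exists (Rabs (D2 i j p) + 1); lra. }
  assert (HD2 : forall i j z, (i < N)%nat -> (j < N)%nat -> Vbox N p r2 z -> Rabs (D2 i j z) <= B2).
  { intros i j z Hi Hj Hz. specialize (P2 i j z Hi Hj Hz). specialize (HB2 i Hi j Hj). lra. }
  destruct (fin_bound N (fun i B => forall z, Vbox N p r2 z -> Rabs (D1 i z) <= B)) as [B1 HB1].
  { intros j B B' H1 H2 z Hz. specialize (H1 z Hz). lra. }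
  { intros i Hi. exists (Rabs (D1 i p) + B2 * (INR N * r2)). intros z Hz.
    assert (Hc : Rabs (D1 i z - D1 i p) <= B2 * rsum N (fun l => Rabs (z l - p l))).
    { apply (chain N (D1 i) (D2 i) p z r2 B2); [|auto].
      intros w Hw j Hj. split; [apply HC2; auto|apply HD2; auto]. }
    assert (Hs := Vbox_rsum N p r2 z Hz).
    assert (0 <= rsum N (fun l => Rabs (z l - p l))) by (apply rsum_nonneg; intros; apply Rabs_pos).
    assert (HB2pos : 0 <= B2 \/ N = 0%nat).
    { destruct N; [right; auto|left]. specialize (HD2 0%nat 0%nat p ltac:(lia) ltac:(lia)).
      assert (0 <= Rabs (D2 0%nat 0%nat p)) by apply Rabs_pos. apply Rle_trans with (Rabs (D2 0%nat 0%nat p)); auto.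
      apply HD2. split; auto. intros; rewrite Rminus_diag, Rabs_R0; lra. }
    assert (Rabs (D1 i z) <= Rabs (D1 i z - D1 i p) + Rabs (D1 i p)).
    { replace (D1 i z) with ((D1 i z - D1 i p) + D1 i p) at 1 by ring. apply Rabs_triang. }
    destruct HB2pos as [HB2pos| ->]; [nra|lia]. }
  set (B := Rabs B1).
  assert (HB : 0 <= B) by apply Rabs_pos.
  set (d := Rmin r2 (eps / (2 * (B * INR N + 1)))).
  assert (HN := pos_INR N).
  assert (Hden : 0 < 2 * (B * INR N + 1)) by nra.
  assert (Hd : 0 < d) by (unfold d; apply Rmin_case; [lra|apply Rdiv_lt_0_compat; lra]).
  exists d. split; auto. intros q Hq.
  assert (Hdr2 : d <= r2) by apply Rmin_l.
  assert (Hc : Rabs (F q - F p) <= B * rsum N (fun l => Rabs (q l - p l))).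
  { apply (chain N F D1 p q r2 B); [|eapply Vbox_mono; eauto].
    intros w Hw j Hj. split; [apply HC1; auto|].
    specialize (HB1 j Hj w Hw). unfold B. assert (B1 <= Rabs B1) by apply Rle_abs. lra. }
  assert (Hs := Vbox_rsum N p d q Hq).
  assert (Hdd : d <= eps / (2 * (B * INR N + 1))) by apply Rmin_r.
  assert (Hk : B * (INR N * d) <= B * INR N * (eps / (2 * (B * INR N + 1)))).
  { rewrite <- Rmult_assoc. apply Rmult_le_compat_l; [nra|auto]. }
  assert (Hk2 : B * INR N * (eps / (2 * (B * INR N + 1))) < eps).
  { apply (Rmult_lt_reg_r (2 * (B * INR N + 1))); auto. field_simplify; nra. }
  assert (B * rsum N (fun l => Rabs (q l - p l)) <= B * (INR N * d)) by (apply Rmult_le_compat_l; auto).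
  lra.
Qed.


Lemma sq_cont1 x eps : 0 < eps -> exists d, 0 < d /\ forall y, Rabs (y - x) < d -> Rabs (y ^ 2 - x ^ 2) < eps.
Proof.
  intros He. set (c := 2 * Rabs x + 1). assert (Hc : 0 < c) by (unfold c; assert (0 <= Rabs x) by apply Rabs_pos; lra).
  exists (Rmin 1 (eps / c)). split; [apply Rmin_case; [lra|apply Rdiv_lt_0_compat; lra]|].
  intros y Hy.
  assert (H1 : Rmin 1 (eps / c) <= 1) by apply Rmin_l.
  assert (H2 : Rmin 1 (eps / c) <= eps / c) by apply Rmin_r.
  replace (y ^ 2 - x ^ 2) with ((y - x) * (y + x)) by ring. rewrite Rabs_mult.
  assert (Hyx : Rabs (y + x) <= Rabs (y - x) + 2 * Rabs x).
  { replace (y + x) with ((y - x) + 2 * x) by ring. eapply Rle_trans; [apply Rabs_triang|].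
    rewrite Rabs_mult, (Rabs_right 2) by lra. lra. }
  assert (0 <= Rabs (y - x)) by apply Rabs_pos. assert (0 <= Rabs (y + x)) by apply Rabs_pos.
  assert (Hb : Rabs (y + x) < c) by (unfold c; lra).
  assert (Rabs (y - x) * Rabs (y + x) <= Rabs (y - x) * c) by (apply Rmult_le_compat_l; lra).
  assert (Rabs (y - x) * c < eps / c * c) by (apply Rmult_lt_compat_r; lra).
  replace (eps / c * c) with eps in * by (field; lra). lra.
Qed.

Lemma sq_cont M o p eps : 0 < eps -> exists d, 0 < d /\ forall q,
  (forall j, (j < M)%nat -> Rabs (q (o + j)%nat - p (o + j)%nat) < d) ->
  Rabs (rsum M (fun j => q (o + j)%nat ^ 2) - rsum M (fun j => p (o + j)%nat ^ 2)) < eps.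
Proof.
  revert eps. induction M; intros eps He.
  - exists 1; split; [lra|]. intros q _. simpl. rewrite Rminus_diag, Rabs_R0; auto.
  - destruct (IHM (eps / 2) ltac:(lra)) as [d1 [Hd1 P1]].
    destruct (sq_cont1 (p (o + M)%nat) (eps / 2) ltac:(lra)) as [d2 [Hd2 P2]].
    exists (Rmin d1 d2). split; [apply Rmin_case; lra|]. intros q Hq.
    assert (A1 := P1 q (fun j Hj => Rlt_le_trans _ _ _ (Hq j ltac:(lia)) (Rmin_l _ _))).
    assert (A2 := P2 (q (o + M)%nat) (Rlt_le_trans _ _ _ (Hq M ltac:(lia)) (Rmin_r _ _))).
    cbn [rsum].
    replace (rsum M (fun j => q (o + j)%nat ^ 2) + q (o + M)%nat ^ 2 -
      (rsum M (fun j => p (o + j)%nat ^ 2) + p (o + M)%nat ^ 2)) with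
      ((rsum M (fun j => q (o + j)%nat ^ 2) - rsum M (fun j => p (o + j)%nat ^ 2)) + (q (o + M)%nat ^ 2 - p (o + M)%nat ^ 2)) by ring.
    eapply Rle_lt_trans; [apply Rabs_triang|]. lra.
Qed.

Lemma quot_cont a b eps : 0 < a -> 0 < eps -> exists d, 0 < d /\ forall x y,
  Rabs (x - a) < d -> Rabs (y - b) < d -> Rabs (y / x - b / a) < eps.
Proof.
  intros Ha He. set (c := a + Rabs b). assert (Hc : 0 < c) by (unfold c; assert (0 <= Rabs b) by apply Rabs_pos; lra).
  set (d := Rmin (a / 2) (eps * a * a / (4 * c))).
  assert (Hd1 : d <= a / 2) by apply Rmin_l.
  assert (Hd2 : d <= eps * a * a / (4 * c)) by apply Rmin_r.
  assert (Hd : 0 < d) by (unfold d; apply Rmin_case; [lra|]; apply Rdiv_lt_0_compat; [|lra]; apply Rmult_lt_0_compat; [nra|lra]).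
  exists d. split; auto. intros x y Hx Hy.
  assert (Hx2 : a / 2 < x) by (apply Rabs_def2 in Hx; lra).
  replace (y / x - b / a) with (((y - b) * a - b * (x - a)) / (x * a)) by (field; lra).
  unfold Rdiv. rewrite Rabs_mult, Rabs_inv, (Rabs_right (x * a)) by nra.
  assert (Hn : Rabs ((y - b) * a - b * (x - a)) <= d * c).
  { eapply Rle_trans; [apply Rabs_triang|]. rewrite Rabs_Ropp, !Rabs_mult, (Rabs_right a) by lra.
    assert (0 <= Rabs b) by apply Rabs_pos. unfold c. nra. }
  assert (Hxa : a * a / 2 < x * a) by nra.
  apply (Rmult_lt_reg_r (x * a)); [nra|]. rewrite Rmult_assoc, Rinv_l, Rmult_1_r by nra.
  assert (d * c <= eps * a * a / 4).
  { replace (eps * a * a / 4) with (eps * a * a / (4 * c) * c) by (field; lra). apply Rmult_le_compat_r; lra. }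
  nra.
Qed.

Lemma close_eq x y : (forall e, 0 < e -> Rabs (x - y) < e) -> x = y.
Proof.
  intros H. destruct (Req_dec x y) as [|Hne]; auto. exfalso.
  assert (Hp : 0 < Rabs (x - y)) by (apply Rabs_pos_lt; lra).
  specialize (H _ Hp). lra.
Qed.

Lemma close_le x y : (forall e, 0 < e -> x - e < y) -> x <= y.
Proof. intros H. destruct (Rle_or_lt x y) as [|Hlt]; auto. specialize (H (x - y) ltac:(lra)). lra. Qed.

Definition hq (al be ga s : R) : R := al * s ^ 2 + be * s + ga.

Lemma hq_cont al be ga s0 eps : 0 < eps -> exists d, 0 < d /\ forall s, Rabs (s - s0) < d -> Rabs (hq al be ga s - hq al be ga s0) < eps.
Proof.
  intros He.
  destruct (sq_cont1 s0 (eps / (2 * (Rabs al + 1)))) as [d1 [Hd1 P1]].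
  { apply Rdiv_lt_0_compat; [lra|]. assert (0 <= Rabs al) by apply Rabs_pos. lra. }
  set (d2 := eps / (2 * (Rabs be + 1))).
  assert (Hd2 : 0 < d2) by (unfold d2; apply Rdiv_lt_0_compat; [lra|]; assert (0 <= Rabs be) by apply Rabs_pos; lra).
  exists (Rmin d1 d2). split; [apply Rmin_case; lra|]. intros s Hs.
  assert (A1 := P1 s (Rlt_le_trans _ _ _ Hs (Rmin_l _ _))).
  assert (A2 : Rabs (s - s0) < d2) by (apply (Rlt_le_trans _ _ _ Hs (Rmin_r _ _))).
  unfold hq. replace (al * s ^ 2 + be * s + ga - (al * s0 ^ 2 + be * s0 + ga)) with
    (al * (s ^ 2 - s0 ^ 2) + be * (s - s0)) by ring.
  eapply Rle_lt_trans; [apply Rabs_triang|]. rewrite !Rabs_mult.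
  assert (0 <= Rabs al) by apply Rabs_pos. assert (0 <= Rabs be) by apply Rabs_pos.
  assert (0 <= Rabs (s - s0)) by apply Rabs_pos. assert (0 <= Rabs (s^2 - s0^2)) by apply Rabs_pos.
  assert (Rabs al * Rabs (s ^ 2 - s0 ^ 2) <= Rabs al * (eps / (2 * (Rabs al + 1)))) by (apply Rmult_le_compat_l; lra).
  assert (Rabs al * (eps / (2 * (Rabs al + 1))) < eps / 2).
  { apply (Rmult_lt_reg_r (2 * (Rabs al + 1))); [lra|]. field_simplify; [nra|lra]. }
  assert (Rabs be * Rabs (s - s0) <= Rabs be * d2) by (apply Rmult_le_compat_l; lra).
  assert (Rabs be * d2 < eps / 2).
  { unfold d2. apply (Rmult_lt_reg_r (2 * (Rabs be + 1))); [lra|]. field_simplify; [nra|lra]. }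
  lra.
Qed.


Lemma ysq_cont k n p eps : (k <= n)%nat -> 0 < eps -> exists d, 0 < d /\ forall q,
  (forall l, (l < S n)%nat -> Rabs (q l - p l) < d) -> Rabs (ysq k q - ysq k p) < eps.
Proof.
  intros Hkn He. destruct (sq_cont (S k) 0 p eps He) as [d [Hd P]].
  exists d; split; auto. intros q Hq. apply (P q). intros j Hj. simpl. apply Hq; lia.
Qed.

Lemma xs_cont k n p eps : (k <= n)%nat -> 0 < eps -> exists d, 0 < d /\ forall q,
  (forall l, (l < S n)%nat -> Rabs (q l - p l) < d) -> Rabs (xs k n q - xs k n p) < eps.
Proof.
  intros Hkn He. destruct (sq_cont (n - k) (S k) p eps He) as [d [Hd P]].
  exists d; split; auto. intros q Hq. apply (P q). intros j Hj. apply Hq; lia.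
Qed.

Lemma margin k n p lo hi : (k <= n)%nat -> 0 < ysq k p -> lo < xs k n p < hi ->
  exists r, 0 < r /\ forall z, (forall l, (l < S n)%nat -> Rabs (z l - p l) < r) ->
    0 < ysq k z /\ lo < xs k n z < hi.
Proof.
  intros Hkn Hy Hx.
  destruct (ysq_cont k n p (ysq k p) Hkn Hy) as [d1 [Hd1 P1]].
  destruct (xs_cont k n p (Rmin (xs k n p - lo) (hi - xs k n p)) Hkn) as [d2 [Hd2 P2]].
  { apply Rmin_case; lra. }
  exists (Rmin d1 d2). split; [apply Rmin_case; lra|]. intros z Hz.
  assert (A1 := P1 z (fun l Hl => Rlt_le_trans _ _ _ (Hz l Hl) (Rmin_l _ _))).
  assert (A2 := P2 z (fun l Hl => Rlt_le_trans _ _ _ (Hz l Hl) (Rmin_r _ _))).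
  assert (Rmin (xs k n p - lo) (hi - xs k n p) <= xs k n p - lo) by apply Rmin_l.
  assert (Rmin (xs k n p - lo) (hi - xs k n p) <= hi - xs k n p) by apply Rmin_r.
  apply Rabs_def2 in A1. apply Rabs_def2 in A2. split; lra.
Qed.

Definition Dphi k n al be (i : nat) (q : nat -> R) : R :=
  if xind k n i then 2 * q i * (2 * al * xs k n q + be) else 0.
Definition D2phi k n al be (i : nat) (q : nat -> R) : R :=
  if xind k n i then 8 * al * q i ^ 2 + 2 * (2 * al * xs k n q + be) else 0.

Lemma phi_d1 k n al be ga q i : (k <= n)%nat ->
  derivable_pt_lim (fun t => hq al be ga (xs k n (upd q i t))) (q i) (Dphi k n al be i q).
Proof.
  intros Hkn. unfold Dphi.
  apply (derivable_pt_lim_ext (fun t => hq al be ga (xs k n q + (if xind k n i then t ^ 2 - q i ^ 2 else 0)))).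
  { intros t; rewrite xs_upd; auto. }
  destruct (xind k n i).
  - set (X' := xs k n q - q i ^ 2).
    replace (2 * q i * (2 * al * xs k n q + be)) with (4 * al * q i ^ 3 + 2 * (2 * al * X' + be) * q i) by (unfold X'; ring).
    eapply derivable_pt_lim_ext; [|apply (dlim_poly4 al (2 * al * X' + be) (al * X' ^ 2 + be * X' + ga))].
    intros t; unfold hq, X'; ring.
  - apply (dlim_const_ext _ (hq al be ga (xs k n q + 0))). auto.
Qed.

Lemma phi_d2 k n al be q i : (k <= n)%nat ->
  derivable_pt_lim (fun t => Dphi k n al be i (upd q i t)) (q i) (D2phi k n al be i q).
Proof.
  intros Hkn. unfold Dphi, D2phi.
  apply (derivable_pt_lim_ext (fun t => if xind k n i then 2 * t * (2 * al * (xs k n q + (t ^ 2 - q i ^ 2)) + be) else 0)).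
  { intros t; rewrite xs_upd, upd_eq; auto. destruct (xind k n i); auto. }
  destruct (xind k n i).
  - set (X' := xs k n q - q i ^ 2).
    replace (8 * al * q i ^ 2 + 2 * (2 * al * xs k n q + be)) with (3 * (4 * al) * q i ^ 2 + 2 * (2 * al * X' + be)) by (unfold X'; ring).
    eapply derivable_pt_lim_ext; [|apply (dlim_poly3 (4 * al) (2 * (2 * al * X' + be)))].
    intros t; unfold X'; ring.
  - apply (dlim_const_ext _ 0). auto.
Qed.

Lemma sum_D2phi k n al be q : (k <= n)%nat ->
  rsum (S n) (fun i => D2phi k n al be i q) = 8 * al * xs k n q + 2 * INR (n - k) * (2 * al * xs k n q + be).
Proof.
  intros Hkn. unfold D2phi. rewrite rsum_ind by auto.
  rewrite rsum_plus, rsum_const, rsum_scal. fold (xs k n q). ring.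
Qed.

Lemma sum_Dphi k n al be q : (k <= n)%nat ->
  rsum (S n) (fun i => q i * Dphi k n al be i q) = 2 * xs k n q * (2 * al * xs k n q + be).
Proof.
  intros Hkn. unfold Dphi. rewrite sum_ind_pair by auto.
  rewrite (rsum_ext _ _ (fun j => (2 * (2 * al * xs k n q + be)) * (q (S k + j)%nat ^ 2))) by (intros; ring).
  rewrite rsum_scal. fold (xs k n q). ring.
Qed.


Definition EVT_prop (N' : nat) := forall (K : (nat->R)->Prop) (f : (nat->R)->R) (B : R),
  (exists p0, K p0) ->
  (forall p, K p -> forall i, (i <= N')%nat -> Rabs (p i) <= B) ->
  (forall p, K p -> forall i, (N' < i)%nat -> p i = 0) ->
  (forall p, (forall i, (N' < i)%nat -> p i = 0) ->
     (forall eps, 0 < eps -> exists q, K q /\ forall i, (i <= N')%nat -> Rabs (q i - p i) < eps) -> K p) ->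
  (forall p, K p -> forall eps, 0 < eps -> exists delta, 0 < delta /\
     forall q, K q -> (forall i, (i <= N')%nat -> Rabs (q i - p i) < delta) -> Rabs (f q - f p) < eps) ->
  exists c, K c /\ forall p, K p -> f p <= f c.

Lemma key k n (hk : (1 <= k)%nat) (hkn : (k + 1 <= n)%nat) (Pr : R -> Prop) (al be ga a b e0 : R)
  (He0 : 0 < e0) (Hab : a < b)
  (HPr : forall s, a - e0 < s < b + e0 -> Pr (sqrt s))
  (Hbd : forall s, 0 <= s -> a <= s <= b -> 0 < hq al be ga s -> a < s < b)
  (HL : forall s, 0 <= s -> a < s < b ->
          0 < 8 * al * s + (2 * INR (n - k) - s) * (2 * al * s + be) + hq al be ga s)
  (Hs0 : exists s0, 0 <= s0 /\ a <= s0 <= b /\ 0 < hq al be ga s0)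
  (HEVT : EVT_prop n) :
  ~ stable_region k n Pr.
Proof.
  intros [w [D1 [D2 [HC Hst]]]].
  assert (Hkn : (k <= n)%nat) by lia.
  set (U := fun p => 0 < ysq k p /\ Pr (rflat k n p)) in HC.
  set (F := ext k n w) in HC, Hst.
  assert (FP : forall q, 0 < ysq k q -> Pr (rflat k n q) -> 0 < F q).
  { intros q Hy HP. unfold F. rewrite <- ext_canon2 by auto.
    apply Hst; [apply canon_cyl; auto|]. rewrite rflat_xs, xs_canon. exact HP. }
  set (K := fun p => ysq k p = 2 * INR k /\ (forall i, (n < i)%nat -> p i = 0) /\ a <= xs k n p <= b).
  set (phi := fun p => hq al be ga (xs k n p)).
  set (f := fun p => phi p / F p).
  assert (Hk2 : 0 < 2 * INR k) by (assert (1 <= INR k) by (apply (le_INR 1); auto); lra).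
  assert (KU : forall p, K p -> exists r, 0 < r /\ forall z, Vbox (S n) p r z -> U z).
  { intros p [Hy [_ Hx]].
    destruct (margin k n p (a - e0) (b + e0) Hkn ltac:(lra) ltac:(lra)) as [r [Hr Pr1]].
    exists (r / 2). split; [lra|]. intros z [_ Hz].
    destruct (Pr1 z) as [A1 A2]. { intros l Hl. specialize (Hz l Hl). lra. }
    split; auto. rewrite rflat_xs. apply HPr. lra. }
  assert (Hp0 : exists p0, K p0 /\ 0 < phi p0).
  { destruct Hs0 as [s0 [Hs0a [Hs0b Hs0c]]].
    exists (upd (upd (fun _ => 0) 0 (rho k)) (S k) (sqrt s0)).
    assert (Hxp : xs k n (upd (upd (fun _ => 0) 0 (rho k)) (S k) (sqrt s0)) = s0).
    { rewrite !xs_upd by auto.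
      replace (xind k n (S k)) with true by (unfold xind; symmetry; apply andb_true_iff; split; [apply Nat.ltb_lt|apply Nat.leb_le]; lia).
      replace (xind k n 0) with false by (unfold xind; symmetry; apply andb_false_iff; left; apply Nat.ltb_ge; lia).
      assert (Hx0 : xs k n (fun _ => 0) = 0) by (unfold xs; apply rsum_zero; intros; simpl; ring).
      rewrite Hx0, pow2_sqrt by auto.
      unfold upd. replace (S k =? 0)%nat with false by (symmetry; apply Nat.eqb_neq; lia).
      ring. }
    split; [split; [|split]|].
    + rewrite !ysq_upd. replace (S k <=? k)%nat with false by (symmetry; apply Nat.leb_gt; lia).
      replace (0 <=? k)%nat with true by (symmetry; apply Nat.leb_le; lia).
      unfold ysq at 1. rewrite rsum_zero by (intros; simpl; ring). rewrite rho_sq. ring.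
    + intros i Hi. unfold upd. destruct (Nat.eqb_spec i (S k)); [lia|]. destruct (Nat.eqb_spec i 0); [lia|auto].
    + rewrite Hxp. lra.
    + unfold phi. rewrite Hxp. auto. }
  destruct (HEVT K f (2 * INR k + Rabs b + 1)) as [c [Kc Hmax]].
  - destruct Hp0 as [p0 [Kp0 _]]. exists p0; exact Kp0.
  -
    intros p [Hy [_ Hx]] i Hi.
    assert (Hsq : p i ^ 2 <= 2 * INR k + Rabs b).
    { assert (0 <= Rabs b) by apply Rabs_pos. assert (b <= Rabs b) by apply Rle_abs.
      destruct (Nat.le_gt_cases i k).
      - assert (p i ^ 2 <= ysq k p) by (unfold ysq; apply (rsum_term (S k) (fun i => p i ^ 2) i); [intros; apply pow2_ge_0|lia]).
        lra.
      - assert (p i ^ 2 <= xs k n p).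
        { unfold xs. replace i with (S k + (i - S k))%nat at 1 by lia.
          apply (rsum_term (n - k) (fun j => p (S k + j)%nat ^ 2)); [intros; apply pow2_ge_0|lia]. }
        lra. }
    assert (Rabs (p i) <= p i ^ 2 + 1).
    { unfold Rabs; destruct (Rcase_abs (p i)); nra. }
    lra.
  - intros p [_ [Hz _]]; exact Hz.
  -
    intros p Hz Happ. split; [|split; auto].
    + apply eq_sym, close_eq. intros e He.
      destruct (ysq_cont k n p e Hkn He) as [d [Hd Pd]].
      destruct (Happ d Hd) as [q [[Hq _] Hqd]].
      rewrite <- Hq. apply Pd. intros l Hl. apply Hqd. lia.
    + split.
      * apply close_le. intros e He.
        destruct (xs_cont k n p e Hkn He) as [d [Hd Pd]].
        destruct (Happ d Hd) as [q [[_ [_ Hq]] Hqd]].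
        assert (A := Pd q (fun l Hl => Hqd l ltac:(lia))). apply Rabs_def2 in A. lra.
      * apply close_le. intros e He.
        destruct (xs_cont k n p e Hkn He) as [d [Hd Pd]].
        destruct (Happ d Hd) as [q [[_ [_ Hq]] Hqd]].
        assert (A := Pd q (fun l Hl => Hqd l ltac:(lia))). apply Rabs_def2 in A. lra.
  -
    intros p Kp eps He.
    destruct (KU p Kp) as [r [Hr HUr]].
    assert (Up : U p) by (apply HUr; split; auto; intros; rewrite Rminus_diag, Rabs_R0; lra).
    assert (Fp : 0 < F p) by (apply FP; apply Up).
    destruct (quot_cont (F p) (phi p) eps Fp He) as [dq [Hdq Pq]].
    destruct (C2_cont (S n) U F D1 D2 p r HC Hr HUr dq Hdq) as [dF [HdF PF]].
    destruct (hq_cont al be ga (xs k n p) dq Hdq) as [dh [Hdh Ph]].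
    destruct (xs_cont k n p dh Hkn Hdh) as [dx [Hdx Px]].
    exists (Rmin dF dx). split; [apply Rmin_case; lra|].
    intros q Kq Hq.
    assert (A1 : Rabs (F q - F p) < dq).
    { apply PF. split.
      - intros l Hl. destruct Kq as [_ [Zq _]]. destruct Kp as [_ [Zp _]]. rewrite Zq, Zp by lia. auto.
      - intros l Hl. assert (Hql := Hq l ltac:(lia)). assert (Rmin dF dx <= dF) by apply Rmin_l. lra. }
    assert (A2 : Rabs (phi q - phi p) < dq).
    { apply Ph. apply Px. intros l Hl. assert (Hql := Hq l ltac:(lia)). assert (Rmin dF dx <= dx) by apply Rmin_r. lra. }
    apply Pq; auto.
  -
    destruct Hp0 as [p0 [Kp0 Hphi0]].
    pose proof Kc as [Hyc [Hzc Hxc]].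
    assert (Uc : U c).
    { split; [lra|]. rewrite rflat_xs. apply HPr. lra. }
    assert (Fc : 0 < F c) by (apply FP; apply Uc).
    assert (Fp0 : 0 < F p0).
    { destruct Kp0 as [Hy0 [_ Hx0]]. apply FP; [lra|]. rewrite rflat_xs. apply HPr. lra. }
    set (M := f c).
    assert (Mpos : 0 < M).
    { assert (f p0 <= M) by (apply Hmax; auto).
      assert (0 < f p0) by (unfold f; apply Rdiv_lt_0_compat; auto). lra. }
    assert (phic : phi c = M * F c) by (unfold M, f; field; lra).
    assert (Hxc2 : a < xs k n c < b).
    { apply Hbd; [apply xs_nonneg|auto|]. fold (phi c). rewrite phic. nra. }
    destruct (margin k n c a b Hkn ltac:(lra) Hxc2) as [r [Hr Pr1]].
    assert (Hz : forall z, (forall l, (l < S n)%nat -> Rabs (z l - c l) < r) ->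
              U z /\ phi z <= M * F z).
    { intros z Hzl. destruct (Pr1 z Hzl) as [Hyz Hxz].
      assert (Uz : U z) by (split; auto; rewrite rflat_xs; apply HPr; lra).
      split; auto.
      assert (Fz : 0 < F z) by (apply FP; apply Uz).
      assert (Kz : K (canon k n z)).
      { split; [apply ysq_canon; auto|split].
        - intros i Hi. unfold canon.
          replace (i <=? k)%nat with false by (symmetry; apply Nat.leb_gt; lia).
          replace (i <=? n)%nat with false by (symmetry; apply Nat.leb_gt; lia). auto.
        - rewrite xs_canon. lra. }
      assert (Hf := Hmax _ Kz). unfold f, phi in Hf. rewrite xs_canon in Hf.
      unfold F in Hf. rewrite ext_canon2 in Hf by auto. fold F in Hf. fold (phi z) in Hf.
      apply (Rmult_le_compat_r (F z)) in Hf; [|lra].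
      change (hq al be ga (xs k n c) / F c) with M in Hf. replace (phi z / F z * F z) with (phi z) in Hf by (field; lra). lra. }
    destruct HC as [HC1 [HC2 _]].
    assert (Hi : forall i, (i < S n)%nat ->
       M * D1 i c - Dphi k n al be i c = 0 /\ 0 <= M * D2 i i c - D2phi k n al be i c).
    { intros i Hin.
      assert (HzU : forall t, Rabs (t - c i) < r -> (forall l, (l < S n)%nat -> Rabs (upd c i t l - c l) < r)).
      { intros t Ht l Hl. unfold upd. destruct (Nat.eqb_spec l i); [subst; auto|].
        rewrite Rminus_diag, Rabs_R0; lra. }
      destruct (second_deriv_test (fun t => M * F (upd c i t) - phi (upd c i t))
                  (fun t => M * D1 i (upd c i t) - Dphi k n al be i (upd c i t)) (c i) r
                  (M * D2 i i c - D2phi k n al be i c)) as [G1 G2]; auto.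
      - intros t Ht. destruct (Hz _ (HzU t Ht)) as [_ Hle]. lra.
      - rewrite upd_same. rewrite phic. ring.
      - intros t Ht. destruct (Hz _ (HzU t Ht)) as [Uz _].
        assert (D1d := HC1 _ Uz i Hin). rewrite upd_eq in D1d.
        assert (Pd := phi_d1 k n al be ga (upd c i t) i Hkn). rewrite upd_eq in Pd.
        assert (A := derivable_pt_lim_minus _ _ _ _ _ (derivable_pt_lim_scal _ M _ _ D1d) Pd).
        eapply derivable_pt_lim_ext; [|exact A].
        intros s. unfold minus_fct, mult_real_fct, phi. rewrite !upd_upd. auto.
      - assert (D2d := HC2 _ Uc i i Hin Hin).
        assert (Pd := phi_d2 k n al be c i Hkn).
        assert (A := derivable_pt_lim_minus _ _ _ _ _ (derivable_pt_lim_scal _ M _ _ D2d) Pd).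
        eapply derivable_pt_lim_ext; [|exact A].
        intros s. unfold minus_fct, mult_real_fct. auto.
      - rewrite upd_same in G1. split; auto. }
    destruct (Hst c Hyc ltac:(apply Uc)) as [_ Hstab].
    unfold stab_op in Hstab. rewrite A2_half in Hstab by auto.
    set (S2 := rsum (S n) (fun i => D2 i i c)) in Hstab.
    set (S1 := rsum (S n) (fun i => c i * D1 i c)) in Hstab.
    assert (E2 : rsum (S n) (fun i => D2phi k n al be i c) <= M * S2).
    { unfold S2. rewrite <- rsum_scal. apply rsum_le. intros i Hin. destruct (Hi i Hin). lra. }
    assert (E1 : rsum (S n) (fun i => c i * Dphi k n al be i c) = M * S1).
    { unfold S1. rewrite <- rsum_scal. apply rsum_ext. intros i Hin. destruct (Hi i Hin) as [H1 _].
      replace (Dphi k n al be i c) with (M * D1 i c) by lra. ring. }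
    rewrite sum_D2phi in E2 by auto. rewrite sum_Dphi in E1 by auto.
    assert (HS2 : S2 = / 2 * S1 - F c) by lra.
    rewrite HS2 in E2.
    assert (HLc := HL (xs k n c) (xs_nonneg k n c) Hxc2).
    unfold phi in phic.
    assert (M * (/ 2 * S1 - F c) = / 2 * (M * S1) - M * F c) by ring.
    lra.
Qed.


Lemma main_thm (k n : nat) (hk1 : (1 <= k)%nat) (hkn : (k <= n - 2)%nat) (HEVT : EVT_prop n) :
  stable_region k n (fun r => r < sqrt (2 * INR (n - k))) /\
  stable_region k n (fun r => r > sqrt (2 * INR (n - k))) /\
  (forall C : R, 0 < C ->
     stable_region k n (fun r => r < C) ->
     stable_region k n (fun r => r > C) ->
     C = sqrt (2 * INR (n - k))).
Proof.
  assert (Hk2 : (k + 2 <= n)%nat) by lia.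
  assert (Hkn : (k <= n)%nat) by lia.
  set (m' := 2 * INR (n - k)).
  assert (Hm' : 4 <= m') by (unfold m'; assert (2 <= INR (n - k)) by (apply (le_INR 2); lia); lra).
  split; [|split].
  - apply (exist_stable k n hk1 Hkn (-1)). intros s Hs Hsq.
    apply sqrt_lt_0_alt in Hsq. unfold m' in *. lra.
  - apply (exist_stable k n hk1 Hkn 1). intros s Hs Hsq.
    apply sqrt_lt_0_alt in Hsq. unfold m' in *. lra.
  - intros C HC st1 st2.
    destruct (Rtotal_order (C ^ 2) m') as [Hlt|[Heq|Hgt]].
    + exfalso.
      set (a := (C ^ 2 + m') / 2).
      assert (Ha : C ^ 2 < a < m') by (unfold a; lra).
      assert (HCa : 0 < C ^ 2) by nra.
      set (b := (4 + m') ^ 2 / (m' - a) + a + 1).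
      assert (Hq : 0 <= (4 + m') ^ 2 / (m' - a)) by (apply Rmult_le_pos; [apply pow2_ge_0|left; apply Rinv_0_lt_compat; lra]).
      assert (Hb1 : (4 + m') ^ 2 / (m' - a) * (m' - a) = (4 + m') ^ 2) by (field; lra).
      refine (key k n hk1 ltac:(lia) (fun r => r > C) (-1) (a + b) (- (a * b)) a b (a - C ^ 2) _ _ _ _ _ _ HEVT st2).
      * lra.
      * unfold b; lra.
      * intros s Hs. unfold Rgt. rewrite <- (sqrt_pow2 C) by lra. apply sqrt_lt_1_alt. lra.
      * intros s Hs0 Hs Hh. unfold hq in Hh.
        destruct (Req_dec s a) as [->|Hna]; [nra|]. destruct (Req_dec s b) as [->|Hnb]; [nra|]. lra.
      * intros s Hs0 Hs. unfold hq. fold m'.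
        assert (Hsq : s ^ 2 - (8 + 2 * m') * s >= - (4 + m') ^ 2) by (assert (0 <= (s - (4 + m')) ^ 2) by apply pow2_ge_0; nra).
        assert (b * (m' - a) > (4 + m') ^ 2).
        { unfold b. replace (((4 + m') ^ 2 / (m' - a) + a + 1) * (m' - a)) with
            ((4 + m') ^ 2 / (m' - a) * (m' - a) + (a + 1) * (m' - a)) by ring.
          rewrite Hb1. nra. }
        nra.
      * assert (a < b) by (unfold b; lra).
        exists ((a + b) / 2). unfold hq. split; [lra|split]; [split; lra|]. nra.
    + rewrite <- Heq. rewrite sqrt_pow2; lra.
    + exfalso.
      set (c0 := (m' + C ^ 2) / 2).
      refine (key k n hk1 ltac:(lia) (fun r => r < C) 0 (-1) c0 (-1) c0 (C ^ 2 - c0) _ _ _ _ _ _ HEVT st1).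
      * unfold c0; lra.
      * unfold c0; lra.
      * intros s Hs. destruct (Rle_or_lt 0 s) as [Hs0|Hs0].
        -- rewrite <- (sqrt_pow2 C) by lra. apply sqrt_lt_1_alt. lra.
        -- rewrite sqrt_neg_0 by lra. auto.
      * intros s Hs0 Hs Hh. unfold hq in Hh. lra.
      * intros s Hs0 Hs. unfold hq. fold m'. unfold c0. lra.
      * exists 0. unfold hq. split; [lra|split]; unfold c0; lra.
Qed.


Theorem proposition4p12 (k n : nat) (hk1 : (1 <= k)%nat) (hkn : (k <= n - 2)%nat) :
  stable_region k n (fun r => r < sqrt (2 * INR (n - k))) /\
  stable_region k n (fun r => r > sqrt (2 * INR (n - k))) /\
  (forall C : R, 0 < C ->
     stable_region k n (fun r => r < C) ->
     stable_region k n (fun r => r > C) ->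
     C = sqrt (2 * INR (n - k))).
Proof.
  apply main_thm; auto.
  intros K f B. exact (EVTmod.EVT_nat' n K f B).
Qed.
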